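(* Let $n\ge1$ and $d\ge0$ be integers, and let $M(x)$ be a monic complex polynomial of degree $2n$, written as $M=A^2+B$ with $A(x)=x^n+\sum_{j=0}^{n-1}a_jx^j$, $B(x)=\sum_{j=0}^{n-1}b_jx^j$. The equation $y''=M(x)y$ has a polynomial-hyperexponential solution of polynomial degree $d$ if and only if $$b_{n-1}^2=(n+2d)^2\quad\text{and}\quad \Delta_d(A(x),B(x))\cdot\Delta_d(-A(x),B(x))=0$$ (the latter as a polynomial identity in $x$). Consequently $\mathbb{L}'_{2n,d}$ is an algebraic subvariety of $\mathbb{M}_{2n}$ (its equations being $b_{n-1}^2=(n+2d)^2$ together with the coefficients in $x$ of $\Delta_d(A,B)\Delta_d(-A,B)$), contained in the union of the hyperplanes $b_{n-1}=2d+n$ and $-b_{n-1}=2d+n$.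
   Context: $\mathbb{Q}\{a,b\}$ is the ring of differential polynomials in two differential indeterminates $a,b$ over $\mathbb{Q}$. Define $\varphi$ on $2\times2$ matrices over $\mathbb{Q}\{a,b\}$ by $\varphi(C)=C'+\begin{pmatrix}-2a&1\\ b-a'&0\end{pmatrix}C$ (entrywise derivative), and $\Delta_p=-\det\left(\varphi^{p+1}(\mathrm{Id})\right)\in\mathbb{Q}\{a,b\}$. Equivalently, with $\ell_{-1}=1$, $r_{-1}=0$, $\ell_0=-2a$, $r_0=b-a'$, $\ell_{j+1}=\ell_j'+r_j+\ell_0\ell_j$, $r_{j+1}=r_j'+r_0\ell_j$, one has $\varphi^{p+1}(\mathrm{Id})=\begin{pmatrix}\ell_p&\ell_{p-1}\\ r_p&r_{p-1}\end{pmatrix}$ and $\Delta_p=r_p\ell_{p-1}-\ell_pr_{p-1}$ (e.g. $\Delta_0=b-a'$). $\Delta_d(A(x),B(x))$ means substituting $a\mapsto A(x)$, $b\mapsto B(x)$, with derivation $d/dx$. $\mathbb{M}_{2n}$ is the set of monic degree-$2n$ polynomials with coordinates $(a_0,\dots,a_{n-1},b_0,\dots,b_{n-1})$ given by the unique decomposition $M=A^2+B$ above. A polynomial-hyperexponential function of polynomial degree $d$ is $P_d(x)\exp(\int A(x)dx)$ with $P_d$ of degree exactly $d$ and $A$ a polynomial; $\mathbb{L}'_{2n,d}$ is the set of $M\in\mathbb{M}_{2n}$ such that $y''=My$ has such a solution. *)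

(* Defs.v *)
From HB Require Import structures.
From mathcomp Require Import all_boot all_order all_algebra.
Set Implicit Arguments. Unset Strict Implicit. Unset Printing Implicit Defensive.
Import Order.TTheory GRing.Theory Num.Theory.
Local Open Scope ring_scope.

Section Delta.
Variable C : numClosedFieldType.

Definition phi_mat (A B : {poly C}) : 'M[{poly C}]_2 :=
  \matrix_(i < 2, j < 2)
    if (i == 0 :> nat) then (if (j == 0 :> nat) then - (2%:R * A) else 1)
    else (if (j == 0 :> nat) then B - A^`() else 0).

Definition phi (A B : {poly C}) (Cm : 'M[{poly C}]_2) : 'M[{poly C}]_2 :=
  map_mx (fun p : {poly C} => p^`()) Cm + phi_mat A B *m Cm.

Definition Delta (p : nat) (A B : {poly C}) : {poly C} :=
  - \det (iter p.+1 (phi A B) 1%:M).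

(* y = P exp(int E) solves y'' = M y  iff  P'' + 2 E P' + (E' + E^2) P = M P. *)
Definition polyhyp_sol (M P E : {poly C}) : Prop :=
  P^`(2) + 2%:R * E * P^`() + (E^`() + E ^+ 2) * P = M * P.

Definition has_polyhyp_sol (M : {poly C}) (d : nat) : Prop :=
  exists P E : {poly C}, size P = d.+1 /\ polyhyp_sol M P E.

End Delta.

(* Main.v *)
Require Import Defs.
From HB Require Import structures.
From mathcomp Require Import all_boot all_order all_algebra.
From mathcomp Require Import ring lra zify.
Import Order.TTheory GRing.Theory Num.Theory.
Local Open Scope ring_scope.

Section S.
Variable C : numClosedFieldType.

Definition nxt (l0 r0 : {poly C}) (p : {poly C} * {poly C}) : {poly C} * {poly C} :=
  (p.1^`() + p.2 + l0 * p.1, p.2^`() + r0 * p.1).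

Lemma det22 (R : comPzRingType) (X : 'M[R]_2) : \det X = X 0 0 * X 1 1 - X 0 1 * X 1 0.
Proof.
rewrite (expand_det_row _ 0) big_ord_recl big_ord_recl big_ord0 addr0.
rewrite /cofactor !det_mx11 !mxE /=.
rewrite !expr0 !mul1r expr1 mulN1r mulrN.
congr (_ * _ - _ * _); congr (X _ _); apply/val_inj => //.
Qed.

Lemma iter_phi (A B : {poly C}) k :
  let Mk := iter k (phi A B) 1%:M in
  (Mk 0 0, Mk 1 0) = iter k (nxt (- (2%:R * A)) (B - A^`())) (1, 0) /\
  (Mk 0 1, Mk 1 1) = iter k (nxt (- (2%:R * A)) (B - A^`())) (0, 1).
Proof.
elim: k => [|k IH] /=.
  by rewrite !mxE.
move: IH; set Mk := iter k _ _ => -[<- <-].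
have E1 : lift ord0 ord0 = 1 :> 'I_2 by apply/val_inj.
rewrite /phi /nxt /= !mxE !big_ord_recl !big_ord0 /= !mxE /= E1.
split; congr (_, _); rewrite /= ?addr0; ring.
Qed.

Lemma Delta_eq (A B : {poly C}) d :
  let l0 := - (2%:R * A) in let r0 := B - A^`() in
  let p := iter d (nxt l0 r0) (1, 0) in let q := nxt l0 r0 p in
  Delta d A B = p.1 * q.2 - q.1 * p.2.
Proof.
move=> l0 r0 p q; rewrite /Delta det22.
have [E0 E1] := iter_phi A B d.+1.
rewrite [X in _ = X]iterSr in E1.
have E2 : nxt (- (2%:R * A)) (B - A^`()) (0, 1) = (1, 0).
  by rewrite /nxt /= !mulr0 !addr0 -[0]/(0%:P) -[1]/(1%:P) !derivC add0r.
rewrite E2 in E1.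
move: E0 E1; set Mk := iter d.+1 _ _.
move=> E0 E1.
have E0' : (Mk 0 0, Mk 1 0) = q by rewrite E0.
have E1' : (Mk 0 1, Mk 1 1) = p by rewrite E1.
have F0 : Mk 0 0 = q.1 by rewrite -E0'.
have F1 : Mk 1 0 = q.2 by rewrite -E0'.
have F2 : Mk 0 1 = p.1 by rewrite -E1'.
have F3 : Mk 1 1 = p.2 by rewrite -E1'.
rewrite F0 F1 F2 F3; ring.
Qed.

Definition Lop (l0 r0 Q : {poly C}) := Q^`(2) - l0 * Q^`() - r0 * Q.
Definition Sop (p : {poly C} * {poly C}) (Q : {poly C}) := p.1 * Q^`() + p.2 * Q.

Lemma derivn2 (Q : {poly C}) : Q^`(2) = Q^`()^`().
Proof. by rewrite derivnS derivn1. Qed.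

Lemma I1 l0 r0 p Q : (Sop p Q)^`() = p.1 * Lop l0 r0 Q + Sop (nxt l0 r0 p) Q.
Proof.
rewrite /Sop /Lop /nxt /= ?derivn2 !derivD !derivM; ring.
Qed.

Lemma I2 l0 r0 p Q :
  p.1 * (Sop p Q)^`() - (nxt l0 r0 p).1 * Sop p Q =
  p.1 ^+ 2 * Lop l0 r0 Q + (p.1 * (nxt l0 r0 p).2 - (nxt l0 r0 p).1 * p.2) * Q.
Proof.
rewrite (I1 l0 r0) /Sop; ring.
Qed.

Lemma Lop_iter l0 r0 P : Lop l0 r0 P = 0 ->
  forall k, P^`(k.+1) = Sop (iter k (nxt l0 r0) (1, 0)) P.
Proof.
move=> HL; elim=> [|k IH].
  by rewrite derivn1 /Sop /= mul1r mul0r addr0.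
by rewrite derivnS IH (I1 l0 r0) HL mulr0 add0r.
Qed.


Lemma size_derivn_le (p : {poly C}) k m : (size p <= m + k)%N -> (size p^`(k) <= m)%N.
Proof.
move=> H; apply/leq_sizeP => j Hj.
rewrite coef_derivn nth_default ?mul0rn //.
by apply: leq_trans H _; rewrite addnC leq_add2l.
Qed.

Lemma derivn_eq0_size (p : {poly C}) k : p^`(k) = 0 -> (size p <= k)%N.
Proof.
move=> H; apply/leq_sizeP => j Hj.
have : p^`(k)`_(j - k) = 0 by rewrite H coef0.
rewrite coef_derivn subnKC // => /eqP.
rewrite mulrn_eq0 => /orP [|/eqP //].
by rewrite eqn0Ngt ffact_gt0 Hj.
Qed.

Notation pi c := ('X - (c : C)%:P).

Lemma dvd_deriv c m (f : {poly C}) : (pi c)^+m %| f -> (pi c)^+(m.-1) %| f^`().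
Proof.
case: m => [|m]; first by move=> _; rewrite expr0 dvd1p.
move/dvdpP => [g ->] /=.
rewrite derivM deriv_exp derivXsubC mul1r /=.
apply: dvdp_add; first by rewrite exprS mulrCA; apply: dvdp_mull; apply: dvdp_mull; apply: dvdpp.
by apply: dvdp_mull; rewrite -mulr_natr; apply: dvdp_mulIl.
Qed.

Lemma exists_nonroot (p : {poly C}) : p != 0 -> exists c, p.[c] != 0.
Proof.
move=> pn0.
set rs := [seq (i%:R : C) | i <- iota 0 (size p)].
case: (boolP (has (fun x => p.[x] != 0) rs)) => [/hasP [x _ Hx]|].
  by exists x.
rewrite -all_predC => Hall.
have Hr : all (root p) rs.
  by apply/allP => x /(allP Hall) /=; rewrite negbK.
have Hu : uniq rs.
  rewrite map_inj_uniq ?iota_uniq // => i j /eqP.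
  by rewrite eqr_nat => /eqP.
have := max_poly_roots pn0 Hr Hu.
by rewrite size_map size_iota ltnn.
Qed.


Lemma pi_neq0 c : pi c != 0.
Proof. by rewrite polyXsubC_eq0. Qed.

Lemma Van c N (u h f : {poly C}) : u.[c] != 0 -> f.[c] = 0 ->
  (pi c)^+N %| u * f^`() - h * f -> (pi c)^+N.+1 %| f.
Proof.
move=> uc fc HN.
suff H : forall j, (j <= N.+1)%N -> (pi c)^+j %| f by apply: H.
elim=> [|j IH] Hj; first by rewrite expr0 dvd1p.
have /dvdpP [g Hg] := IH (ltnW Hj).
case: j Hj Hg {IH} => [|j] Hj Hg.
  by rewrite expr1 -root_factor_theorem /root fc.
set w := u * ((g^`() * pi c) + g *+ j.+1) - h * g * pi c.
have Hw : u * f^`() - h * f = (pi c)^+j * w.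
  rewrite /w Hg derivM deriv_exp derivXsubC mul1r /= !exprS; ring.
rewrite Hw in HN.
have H1 : (pi c)^+j * pi c %| (pi c)^+j * w.
  by apply: dvdp_trans HN; rewrite -exprSr; apply: dvdp_exp2l.
rewrite dvdp_mul2l ?expf_neq0 ?pi_neq0 // in H1.
have H2 : pi c %| (u * g) *+ j.+1.
  have -> : (u * g) *+ j.+1 = w + pi c * (h * g - u * g^`()) by rewrite /w; ring.
  by apply: dvdp_add => //; apply: dvdp_mulIl.
move: H2; rewrite -root_factor_theorem /root hornerMn hornerM mulrn_eq0 /= mulf_eq0 (negbTE uc) /=.
rewrite -/(root g c) root_factor_theorem => /dvdpP [g2 Hg2].
by rewrite Hg Hg2 -mulrA -exprS; apply: dvdp_mull; apply: dvdpp.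
Qed.


Lemma lin_exists N (Phi : {poly C} -> {poly C}) :
  (forall a x y, Phi (a *: x + y) = a *: Phi x + Phi y) ->
  (forall x, size (Phi x) <= N)%N ->
  exists Q : {poly C}, Q != 0 /\ (size Q <= N.+1)%N /\ Phi Q = 0.
Proof.
move=> Hlin Hsz.
have Phi0 : Phi 0 = 0.
  have := Hlin 1 0 0; rewrite !scale1r addr0 -{1}[Phi 0]add0r.
  by move=> /addIr <-.
have Hsum : forall K (E : nat -> C), Phi (\poly_(i < K) E i) = \sum_(i < K) E i *: Phi 'X^i.
  move=> K E; rewrite poly_def.
  apply: (big_ind2 (fun x y => Phi x = y)) => //.
    by move=> x1 x2 y1 y2 <- <-; rewrite -{1}[x1]scale1r Hlin scale1r.
  by move=> i _; rewrite -[_ *: 'X^i]addr0 Hlin Phi0 addr0.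
pose Amx : 'M[C]_(N.+1, N) := \matrix_(i < N.+1, j < N) (Phi 'X^i)`_j.
have Hrk : (0 < \rank (kermx Amx))%N.
  by rewrite mxrank_ker subn_gt0 ltnS rank_leq_col.
set v := nz_row (kermx Amx).
have vn0 : v != 0 by rewrite nz_row_eq0 -mxrank_eq0 -lt0n.
have vA : v *m Amx = 0 by apply/sub_kermxP; exact: nz_row_sub.
exists (\poly_(i < N.+1) v 0 (inord i)).
split; last split.
- apply: contra vn0 => /eqP H; apply/eqP/rowP => j; rewrite mxE.
  have : (\poly_(i < N.+1) v 0 (inord i))`_j = 0 by rewrite H coef0.
  by rewrite coef_poly ltn_ord inord_val.
- exact: size_poly.
- rewrite Hsum; apply/polyP => j; rewrite coef0 coef_sum.
  case: (ltnP j N) => Hj.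
    have := congr1 (fun M : 'rV_N => M 0 (Ordinal Hj)) vA.
    rewrite !mxE /= => H; apply: etrans H; apply: eq_bigr => i _.
    by rewrite coefZ inord_val mxE.
  apply: big1 => i _; rewrite coefZ nth_default ?mulr0 //.
  exact: leq_trans (Hsz _) Hj.
Qed.


Lemma size_sub_le (x y : {poly C}) m : (size x <= m)%N -> (size y <= m)%N -> (size (x - y)%R <= m)%N.
Proof.
move=> Hx Hy; apply: leq_trans (size_polyD _ _) _.
by rewrite size_polyN geq_max Hx Hy.
Qed.

Lemma size_mul_le2 (x y : {poly C}) a b : (size x <= a)%N -> (size y <= b.+1)%N -> (size (x * y)%R <= a + b)%N.
Proof.
move=> Hx Hy; apply: leq_trans (size_polyMleq _ _) _.
have : (size x + size y <= a + b.+1)%N by apply: leq_add.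
move=> H; lia.
Qed.

Lemma Lop_lin l0 r0 a x y : Lop l0 r0 (a *: x + y) = a *: Lop l0 r0 x + Lop l0 r0 y.
Proof.
rewrite /Lop !derivnD !derivnZ !derivD !derivZ -!mul_polyC; ring.
Qed.

Lemma Sop_lin p a x y : Sop p (a *: x + y) = a *: Sop p x + Sop p y.
Proof.
rewrite /Sop !derivD !derivZ -!mul_polyC; ring.
Qed.

Lemma construct (l0 r0 : {poly C}) d :
  let p := iter d (nxt l0 r0) (1, 0) in let q := nxt l0 r0 p in
  p.1 != 0 -> p.1 * q.2 - q.1 * p.2 = 0 ->
  exists Q : {poly C}, Q != 0 /\ (size Q <= d.+1)%N /\ Lop l0 r0 Q = 0.
Proof.
move=> p q pn0 HD.
have [c Hc] := exists_nonroot _ pn0.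
pose N := (size l0 + size r0 + d + 1)%N.
pose Phi Q := (Lop l0 r0 Q %% (pi c)^+N) + (Sop p Q).[c] *: 'X^N.
have Hlin : forall a x y, Phi (a *: x + y) = a *: Phi x + Phi y.
  move=> a x y; rewrite /Phi Lop_lin Sop_lin modpD modpZl hornerD hornerZ.
  by rewrite scalerDl -scalerA scalerDr addrACA.
have HN : forall Q, (size (Lop l0 r0 Q %% (pi c)^+N)%R <= N)%N.
  by move=> Q; rewrite -ltnS -(size_exp_XsubC N c) ltn_modp expf_neq0 ?pi_neq0.
have Hsz : forall x, (size (Phi x) <= N.+1)%N.
  move=> x; apply: leq_trans (size_polyD _ _) _.
  rewrite geq_max (leq_trans (HN x)) //.
  by apply: leq_trans (size_scale_leq _ _) _; rewrite size_polyXn.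
have [Q [Qn0 [HQs HQ]]] := lin_exists _ _ Hlin Hsz.
have Hc0 : (Sop p Q).[c] = 0.
  have : (Phi Q)`_N = 0 by rewrite HQ coef0.
  by rewrite coefD coefZ coefXn eqxx mulr1 nth_default ?add0r.
have HL : (pi c)^+N %| Lop l0 r0 Q.
  by apply/modp_eq0P; move: HQ; rewrite /Phi Hc0 scale0r addr0.
have HE : forall k, (pi c)^+(N.+1 - k) %| Q^`(k.+1) - Sop (iter k (nxt l0 r0) (1,0)) Q.
  elim=> [|k IH].
    by rewrite derivn1 /Sop /= mul1r mul0r addr0 subrr dvdp0.
  have -> : Q^`(k.+2) - Sop (iter k.+1 (nxt l0 r0) (1,0)) Q =
     (Q^`(k.+1) - Sop (iter k (nxt l0 r0) (1,0)) Q)^`() + (iter k (nxt l0 r0) (1,0)).1 * Lop l0 r0 Q.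
    by rewrite iterS derivnS derivB (I1 l0 r0); ring.
  apply: dvdp_add; first by rewrite subnS; apply: dvd_deriv.
  apply: dvdp_mull; apply: dvdp_trans HL; apply: dvdp_exp2l.
  by rewrite subSS leq_subr.
set f := Sop p Q.
have Hf : (pi c)^+N %| p.1 * f^`() - q.1 * f.
  by rewrite /f /q (I2 l0 r0) -/q HD mul0r addr0; apply: dvdp_mull.
have Hf1 : (pi c)^+N.+1 %| f := Van _ _ _ _ _ Hc Hc0 Hf.
have HD1 : (pi c)^+(N.+1 - d) %| Q^`(d.+1).
  rewrite -(subrK f (Q^`(d.+1))); apply: dvdp_add; first exact: HE.
  by apply: dvdp_trans Hf1; apply: dvdp_exp2l; apply: leq_subr.
have Qd0 : Q^`(d.+1) = 0.
  apply/eqP; apply: contraT => Hn.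
  have := dvdp_leq Hn HD1; rewrite size_exp_XsubC.
  have : (size Q^`(d.+1) <= N.+1 - d)%N.
    apply: size_derivn_le; apply: leq_trans HQs _.
    rewrite /N; lia.
  move=> H1 H2; have := leq_trans H2 H1; rewrite /N; lia.
have HQd : (size Q <= d.+1)%N := derivn_eq0_size _ _ Qd0.
exists Q; split => //; split => //.
apply/eqP; apply: contraT => Hn.
have := dvdp_leq Hn HL; rewrite size_exp_XsubC.
have : (size (Lop l0 r0 Q) <= N)%N.
  have HQ1 : (size Q^`() <= d.+1)%N.
    by apply: (@size_derivn_le _ 1); lia.
  rewrite /Lop; apply: size_sub_le; first apply: size_sub_le.
  - by apply: size_derivn_le; apply: leq_trans HQd _; rewrite /N; lia.
  - by apply: leq_trans (size_mul_le2 _ _ _ _ (leqnn _) HQ1) _; rewrite /N; lia.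
  - by apply: leq_trans (size_mul_le2 _ _ _ _ (leqnn _) HQd) _; rewrite /N; lia.
move=> H1 H2; have := leq_trans H2 H1; lia.
Qed.


Lemma two_neq0 : (2%:R : C) != 0.
Proof. by rewrite pnatr_eq0. Qed.

Lemma size_twice (x : {poly C}) : size (x *+ 2) = size x.
Proof. by rewrite -scaler_nat size_scale // two_neq0. Qed.

Lemma coef_top (p q : {poly C}) i j : (size p <= i.+1)%N -> (size q <= j.+1)%N ->
  (p * q)`_(i + j) = p`_i * q`_j.
Proof.
move=> Hp Hq; rewrite coefM.
have Hi : (i < (i + j).+1)%N by rewrite ltnS leq_addr.
rewrite (bigD1 (Ordinal Hi)) //= big1 ?addr0; first by rewrite addKn.
move=> [t Ht] /= Hti.
have Hti' : t != i by apply: contra Hti => /eqP Heq; apply/eqP/val_inj.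
case: (ltngtP t i) => Hc.
- rewrite [q`__]nth_default ?mulr0 //.
  have Ht2 := Ht; rewrite ltnS in Ht2; apply: leq_trans Hq _; lia.
- by rewrite [p`__]nth_default ?mul0r //; apply: leq_trans Hp _.
- by rewrite Hc eqxx in Hti'.
Qed.

Lemma size_iter (l0 r0 : {poly C}) s : size l0 = s.+1 -> (size r0 <= s)%N ->
  forall k, size (iter k (nxt l0 r0) (1, 0)%R).1 = (k * s).+1 /\
            (size (iter k (nxt l0 r0) (1, 0)%R).2 <= k * s)%N.
Proof.
move=> Hl Hr; elim=> [|k [IH1 IH2]] /=.
  by rewrite size_poly1 size_poly0.
rewrite /nxt /=.
set u := (iter k _ _).1 in IH1 *; set v := (iter k _ _).2 in IH2 *.
have un0 : u != 0 by rewrite -size_poly_eq0 IH1.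
have ln0 : l0 != 0 by rewrite -size_poly_eq0 Hl.
have Hu' : (size u^`() <= k * s)%N.
  by rewrite -derivn1; apply: size_derivn_le; rewrite IH1 addn1.
have Hv' : (size v^`() <= k * s)%N.
  by rewrite -derivn1; apply: size_derivn_le; rewrite addn1 (leq_trans IH2).
split.
  rewrite addrC size_polyDl size_mul // Hl IH1; first by rewrite mulSn; lia.
  apply: leq_ltn_trans (size_polyD _ _) _; rewrite gtn_max.
  apply/andP; split; lia.
apply: leq_trans (size_polyD _ _) _; rewrite geq_max; apply/andP; split.
  by apply: leq_trans Hv' _; rewrite mulSn leq_addl.
apply: leq_trans (size_polyMleq _ _) _; rewrite IH1 mulSn; lia.
Qed.


Lemma E_pm n (A B P E : {poly C}) : (1 <= n)%N -> size A = n.+1 -> (size B <= n)%N -> P != 0 ->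
  polyhyp_sol (A^+2 + B) P E -> E = A \/ E = -A.
Proof.
rewrite /polyhyp_sol => n1 HA HB Pn0 Hs.
have [G eG] : exists G : {poly C}, G = E - A by eexists.
have [H eH] : exists H : {poly C}, H = E + A by eexists.
case: (eqVneq G 0) => [HG|Gn0].
  by left; apply/eqP; rewrite -subr_eq0 -eG HG.
case: (eqVneq H 0) => [HH|Hn0].
  by right; apply/eqP; rewrite -addr_eq0 -eH HH.
exfalso.
have key : (G * H - B) * P = - (P^`(2) + 2%:R * E * P^`() + E^`() * P).
  apply/eqP; rewrite -subr_eq0; apply/eqP.
  transitivity ((P^`(2) + 2%:R * E * P^`() + (E^`() + E ^+ 2) * P) - (A ^+ 2 + B) * P).
    by rewrite eG eH; ring.
  by rewrite Hs subrr.
set m := maxn (size G) (size H).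
have Hm : (n.+1 <= m)%N.
  have E2 : H - G = A *+ 2 by rewrite eG eH mulr2n; ring.
  rewrite -HA -size_twice -E2; apply: leq_trans (size_polyD _ _) _.
  by rewrite size_polyN maxnC.
have sG : (0 < size G)%N by rewrite size_poly_gt0.
have sH : (0 < size H)%N by rewrite size_poly_gt0.
have sGH : size (G * H) = (size G + size H).-1 by rewrite size_mul.
have hmGH : (m <= (size G + size H).-1)%N.
  rewrite /m; case/orP: (leq_total (size G) (size H)) => h.
    rewrite (maxn_idPr h); lia.
  rewrite (maxn_idPl h); lia.
have sE : (size E <= m)%N.
  have E2 : E *+ 2 = G + H by rewrite eG eH mulr2n; ring.
  by rewrite -size_twice E2; apply: leq_trans (size_polyD _ _) _.
clearbody m.
have sGHB : size (G * H - B) = size (G * H).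
  rewrite size_polyDl // size_polyN sGH; apply: leq_ltn_trans HB _; exact: leq_trans Hm hmGH.
have sP : (0 < size P)%N by rewrite size_poly_gt0.
have sL : size ((G * H - B) * P) = (size (G * H) + size P).-1.
  rewrite size_mul ?sGHB // -size_poly_gt0 sGHB sGH; lia.
have sP1 : (size P^`() <= (size P).-1)%N.
  by rewrite -derivn1; apply: size_derivn_le; lia.
have sP2 : (size P^`(2) <= size P)%N.
  by apply: size_derivn_le; lia.
have sE1 : (size E^`() <= m.-1)%N.
  by rewrite -derivn1; apply: size_derivn_le; lia.
have s2E : size (2%:R * E) = size E by rewrite mulr_natl size_twice.
have sT1 : (size (2%:R * E * P^`())%R <= (m + (size P).-1).-1)%N.
  by apply: leq_trans (size_polyMleq _ _) _; rewrite s2E; lia.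
have sT2 : (size (E^`() * P)%R <= (m.-1 + size P).-1)%N.
  by apply: leq_trans (size_polyMleq _ _) _; lia.
have b1 : (size P^`(2) <= (m + size P).-2)%N by lia.
have b2 : (size (2%:R * E * P^`())%R <= (m + size P).-2)%N by lia.
have b3 : (size (E^`() * P)%R <= (m + size P).-2)%N by lia.
have sR : (size (- (P^`(2) + 2%:R * E * P^`() + E^`() * P))%R <= (m + size P).-2)%N.
  rewrite size_polyN; apply: leq_trans (size_polyD _ _) _; rewrite geq_max b3 andbT.
  by apply: leq_trans (size_polyD _ _) _; rewrite geq_max b1 b2.
have E1 : size ((G * H - B) * P) = size (- (P^`(2) + 2%:R * E * P^`() + E^`() * P)) by rewrite key.
rewrite -E1 sL in sR; lia.
Qed.


Lemma lc m (A B Q : {poly C}) (eps : C) k : (size A <= m.+2)%N -> A`_m.+1 = 1 ->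
  (size B <= m.+1)%N -> size Q = k.+1 ->
  Lop (-(2%:R * (eps *: A))) (B - (eps *: A)^`()) Q = 0 ->
  B`_m = eps * (2 * k + m.+1)%N%:R.
Proof.
move=> HA HA1 HB HQ HL.
have Qn0 : Q != 0 by rewrite -size_poly_gt0 HQ.
have lcn0 : Q`_k != 0.
  by move: Qn0; rewrite -lead_coef_eq0 lead_coefE HQ.
have c0 : (Lop (-(2%:R * (eps *: A))) (B - (eps *: A)^`()) Q)`_(m + k) = 0 by rewrite HL coef0.
have e1 : (-(2%:R * (eps *: A)) * Q^`()) = - ((eps * 2%:R) *: (A * Q^`())).
  by rewrite -!mul_polyC rmorphM rmorph_nat /=; ring.
have e2 : (B - (eps *: A)^`()) * Q = B * Q - eps *: (A^`() * Q).
  by rewrite derivZ -!mul_polyC; ring.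
rewrite /Lop e1 e2 !coefB coefN !coefZ in c0.
have t0 : Q^`(2)`_(m + k) = 0.
  by rewrite coef_derivn nth_default ?mul0rn // HQ; lia.
have t1 : (A * Q^`())`_(m + k) = Q`_k *+ k.
  clear t0 c0; case: k HQ lcn0 => [|k] HQ _.
    have -> : Q^`() = 0.
      by apply/size_poly_leq0P; rewrite -derivn1; apply: size_derivn_le; rewrite HQ.
    by rewrite mulr0 coef0 mulr0n.
  rewrite -addSnnS coef_top //; last first.
    by rewrite -derivn1; apply: size_derivn_le; rewrite HQ addn1.
  by rewrite HA1 mul1r coef_deriv.
have t2 : (A^`() * Q)`_(m + k) = (A`_m.+1 *+ m.+1) * Q`_k.
  rewrite coef_top ?HQ ?coef_deriv //.
  by rewrite -derivn1; apply: size_derivn_le; rewrite addn1.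
have t3 : (B * Q)`_(m + k) = B`_m * Q`_k by rewrite coef_top ?HQ.
rewrite t0 t1 t2 t3 HA1 in c0.
apply/eqP; rewrite -subr_eq0; apply/eqP.
apply: (mulIf lcn0); rewrite mul0r -[0 in RHS]oppr0; apply: etrans (congr1 (fun x => - x) c0).
rewrite natrD natrM -[Q`_k *+ k]mulr_natr; ring.
Qed.

Lemma sol_L (A B a P : {poly C}) : a ^+ 2 = A ^+ 2 ->
  (polyhyp_sol (A ^+ 2 + B) P a <-> Lop (-(2%:R * a)) (B - a^`()) P = 0).
Proof.
move=> Ha.
have E : Lop (-(2%:R * a)) (B - a^`()) P =
   (P^`(2) + 2%:R * a * P^`() + (a^`() + a ^+ 2) * P) - (a ^+ 2 + B) * P.
  by rewrite /Lop; ring.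
rewrite /polyhyp_sol; split => H.
  by rewrite E H Ha subrr.
by apply/eqP; rewrite -subr_eq0 -Ha -E H.
Qed.

Lemma dir_backward (n d : nat) (a B : {poly C}) : size a = n.+1 -> (size B <= n)%N ->
  Delta d a B = 0 ->
  exists Q : {poly C}, Q != 0 /\ (size Q <= d.+1)%N /\ Lop (-(2%:R * a)) (B - a^`()) Q = 0.
Proof.
move=> Ha HB; rewrite Delta_eq => HD.
apply: construct HD.
have s1 : size (-(2%:R * a)) = n.+1 by rewrite size_polyN mulr_natl size_twice.
have s2 : (size (B - a^`())%R <= n)%N.
  apply: size_sub_le => //.
  by rewrite -derivn1; apply: size_derivn_le; rewrite Ha addn1.
have [H1 _] := @size_iter (-(2%:R * a)) (B - a^`()) n s1 s2 d.
by rewrite -size_poly_gt0 H1.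
Qed.

Lemma dir_forward (d : nat) (a B P : {poly C}) : size P = d.+1 ->
  Lop (-(2%:R * a)) (B - a^`()) P = 0 -> Delta d a B = 0.
Proof.
move=> HP HL; rewrite Delta_eq.
set l0 := -(2%:R * a); set r0 := B - a^`().
have Pn0 : P != 0 by rewrite -size_poly_gt0 HP.
have D0 : forall j, (d < j)%N -> P^`(j) = 0.
  move=> j Hj; apply/size_poly_leq0P; apply: size_derivn_le; rewrite HP add0n //.
have S0 : Sop (iter d (nxt l0 r0) (1, 0)) P = 0.
  by rewrite -(Lop_iter _ _ _ HL d) D0.
have S1 : Sop (nxt l0 r0 (iter d (nxt l0 r0) (1, 0))) P = 0.
  by rewrite -[nxt _ _ _]/(iter d.+1 (nxt l0 r0) (1, 0)) -(Lop_iter _ _ _ HL d.+1) D0.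
have := I2 l0 r0 (iter d (nxt l0 r0) (1, 0)) P.
rewrite S0 HL deriv0 !mulr0 subrr add0r => /esym /eqP.
by rewrite mulf_eq0 (negbTE Pn0) orbF => /eqP.
Qed.


Lemma main_aux (n d : nat) (M A B : {poly C}) :
  (1 <= n)%N ->
  (size (A - 'X^n)%R <= n)%N -> (size B <= n)%N ->
  M = A ^+ 2 + B ->
  (has_polyhyp_sol M d <->
     (B`_(n.-1) ^+ 2 = ((n + 2 * d)%N%:R) ^+ 2 /\
      Delta d A B * Delta d (- A) B = 0))
  /\ (has_polyhyp_sol M d ->
        B`_(n.-1) = ((2 * d + n)%N%:R) \/ - B`_(n.-1) = ((2 * d + n)%N%:R)).
Proof.
case: n => [//|m] _ HAX HB HM /=.
have HA1 : A`_m.+1 = 1.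
  have : (A - 'X^(m.+1))`_m.+1 = 0 by rewrite nth_default.
  by rewrite coefB coefXn eqxx => /eqP; rewrite subr_eq0 => /eqP.
have sA : size A = m.+2.
  have -> : A = 'X^(m.+1) + (A - 'X^(m.+1)) by rewrite addrC subrK.
  by rewrite size_polyDl size_polyXn // ltnS.
have HAle : (size A <= m.+2)%N by rewrite sA.
have sq1 : forall eps : C, (eps = 1 \/ eps = -1) -> eps ^+ 2 = 1.
  by move=> eps [->|->]; rewrite ?sqrrN expr1n.
have sz : forall eps : C, (eps = 1 \/ eps = -1) -> size (eps *: A) = m.+2.
  by move=> eps [->|->]; rewrite ?scale1r ?scaleN1r ?size_polyN.
have a2 : forall eps : C, (eps = 1 \/ eps = -1) -> (eps *: A) ^+ 2 = A ^+ 2.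
  by move=> eps He; rewrite exprZn sq1 // scale1r.
have fwd : has_polyhyp_sol M d -> exists eps : C, (eps = 1 \/ eps = -1) /\
     B`_m = eps * (2 * d + m.+1)%N%:R /\ Delta d (eps *: A) B = 0.
  move=> [P [E [HP Hs]]]; rewrite HM in Hs.
  have Pn0 : P != 0 by rewrite -size_poly_gt0 HP.
  have [eE|eE] := E_pm m.+1 A B P E isT sA HB Pn0 Hs.
    exists 1; have He : (1 : C) = 1 \/ (1 : C) = -1 by left.
    have eE' : E = 1 *: A by rewrite scale1r.
    rewrite eE' in Hs; have HL := (sol_L A B (1 *: A) P (a2 _ He)).1 Hs.
    split => //; split; first exact: lc HAle HA1 HB HP HL.
    exact: dir_forward HP HL.
  exists (-1); have He : (-1 : C) = 1 \/ (-1 : C) = -1 by right.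
  have eE' : E = (-1) *: A by rewrite scaleN1r.
  rewrite eE' in Hs; have HL := (sol_L A B ((-1) *: A) P (a2 _ He)).1 Hs.
  split => //; split; first exact: lc HAle HA1 HB HP HL.
  exact: dir_forward HP HL.
split; [split|].
- move/fwd => [eps [Heps [Hb HD]]]; split.
    by rewrite Hb exprMn sq1 // mul1r addnC.
  by case: Heps HD => ->; rewrite ?scale1r ?scaleN1r => ->; rewrite ?mul0r ?mulr0.
- move=> [Hsq HD].
  have [eps [Heps HDa]] : exists eps : C, (eps = 1 \/ eps = -1) /\ Delta d (eps *: A) B = 0.
    move: HD => /eqP; rewrite mulf_eq0 => /orP [/eqP H|/eqP H].
      by exists 1; rewrite scale1r; split => //; left.
    by exists (-1); rewrite scaleN1r; split => //; right.
  have [Q [Qn0 [HQs HL]]] := dir_backward m.+1 d (eps *: A) B (sz _ Heps) HB HDa.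
  have HQk : size Q = (size Q).-1.+1 by rewrite prednK // size_poly_gt0.
  have Hb := lc m A B Q eps _ HAle HA1 HB HQk HL.
  have Hk : (size Q).-1 = d.
    move: Hsq; rewrite Hb exprMn sq1 // mul1r -!natrX => /eqP.
    rewrite eqr_nat eqn_exp2r // => /eqP; lia.
  exists Q, (eps *: A); split; first by rewrite HQk Hk.
  by rewrite HM; apply/(sol_L _ _ _ _ (a2 _ Heps)).
- move/fwd => [eps [Heps [Hb _]]].
  by case: Heps Hb => -> ->; [left; rewrite mul1r | right; rewrite mulN1r opprK].
Qed.

End S.

Theorem mainTheorem7 (C : numClosedFieldType) (n d : nat) (M A B : {poly C}) :
  (1 <= n)%N ->
  M \is monic -> size M = (2 * n).+1 ->
  (size (A - 'X^n)%R <= n)%N -> (size B <= n)%N ->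
  M = A ^+ 2 + B ->
  (has_polyhyp_sol M d <->
     (B`_(n.-1) ^+ 2 = ((n + 2 * d)%N%:R) ^+ 2 /\
      Delta d A B * Delta d (- A) B = 0))
  /\ (has_polyhyp_sol M d ->
        B`_(n.-1) = ((2 * d + n)%N%:R) \/ - B`_(n.-1) = ((2 * d + n)%N%:R)).
Proof.
move=> n1 _ _ HAX HB HM; exact: main_aux.
Qed.
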